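(* Let $N=2^n$ and $L=\{f:\{0,1\}^n\to\{0,1\}\ :\ \exists s\in\{0,1\}^n\setminus\{0^n\}\ \forall x\ f(x)=f(x\oplus s)\}$. Every classical probabilistic property tester for $L$ with distance parameter $1/8$ (even with two-sided error) makes $\Omega(\sqrt N)$ queries.
   Context: Functions $f:\{0,1\}^n\to\{0,1\}$ are identified with strings of length $N=2^n$. $f$ is $\epsilon$-far from $L$ if it differs from every $g\in L$ in more than $\epsilon N$ points. A classical property tester with distance parameter $\epsilon$ is a probabilistic (possibly adaptive) algorithm querying values $f(x)$ that accepts every $f\in L$ with probability $\ge2/3$ and every $\epsilon$-far $f$ with probability $\le1/3$; complexity is the number of queries. *)

(* Defs.v *)
From HB Require Import structures.
From mathcomp Require Import all_boot all_order all_algebra.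
Set Implicit Arguments. Unset Strict Implicit. Unset Printing Implicit Defensive.
Import Order.TTheory GRing.Theory Num.Theory.

Definition point (n : nat) : finType := {ffun 'I_n -> bool}.

Definition xorp n (x s : point n) : point n := [ffun i => x i (+) s i].

Definition zerop n : point n := [ffun _ => false].

Definition boolfun (n : nat) : finType := {ffun point n -> bool}.

Definition inL n (f : boolfun n) : bool :=
  [exists s : point n, (s != zerop n) && [forall x : point n, f x == f (xorp x s)]].

Definition fdist n (f g : boolfun n) : nat := #|[set x : point n | f x != g x]|.

(* Deterministic adaptive query algorithms = decision trees: a node queries f at
   a point and continues according to the answer; a leaf outputs accept/reject. *)
Inductive dtree (n : nat) : Type :=
| Leaf of bool
| Node of point n & dtree n & dtree n.

Fixpoint run n (t : dtree n) (f : boolfun n) : bool :=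
  match t with
  | Leaf b => b
  | Node x t0 t1 => if f x then run t1 f else run t0 f
  end.

Fixpoint depth n (t : dtree n) : nat :=
  match t with
  | Leaf _ => 0
  | Node _ t0 t1 => (maxn (depth t0) (depth t1)).+1
  end.

Local Open Scope ring_scope.

(* A probabilistic (possibly adaptive) query algorithm: a probability distribution
   over deterministic decision trees, given by a finite list of (weight, tree). *)
Definition rand_alg (R : realFieldType) n := seq (R * dtree n).

Definition is_distribution (R : realFieldType) n (A : rand_alg R n) : Prop :=
  all (fun p => 0 <= p.1) A /\ \sum_(p <- A) p.1 = 1.

Definition accept_prob (R : realFieldType) n (A : rand_alg R n) (f : boolfun n) : R :=
  \sum_(p <- A) p.1 * (run p.2 f)%:R.

Definition makes_at_most (R : realFieldType) n (A : rand_alg R n) (q : nat) : Prop :=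
  all (fun p => depth p.2 <= q)%N A.

Definition eps_far (R : realFieldType) n (eps : R) (f : boolfun n) : Prop :=
  forall g : boolfun n, inL g -> eps * (2 ^ n)%:R < (fdist f g)%:R.

Definition is_tester (R : realFieldType) n (eps : R) (A : rand_alg R n) : Prop :=
  is_distribution A /\
  (forall f : boolfun n, inL f -> 2 / 3 <= accept_prob A f) /\
  (forall f : boolfun n, eps_far eps f -> accept_prob A f <= 1 / 3).

(* Main.v *)
Require Import Defs.
From HB Require Import structures.
From mathcomp Require Import all_boot all_order all_algebra.
From mathcomp Require Import ring lra zify.
Import Order.TTheory GRing.Theory Num.Theory.
Set Implicit Arguments. Unset Strict Implicit. Unset Printing Implicit Defensive.

Section Xor.
Variable n : nat.
Implicit Types x y s : point n.

Lemma xorpK x s : xorp (xorp x s) s = x.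
Proof. by apply/ffunP=> i; rewrite !ffunE addbK. Qed.
Lemma xorpC x y : xorp x y = xorp y x.
Proof. by apply/ffunP=> i; rewrite !ffunE addbC. Qed.
Lemma xorpA x y s : xorp (xorp x y) s = xorp x (xorp y s).
Proof. by apply/ffunP=> i; rewrite !ffunE addbA. Qed.
Lemma xorpp x : xorp x x = zerop n.
Proof. by apply/ffunP=> i; rewrite !ffunE addbb. Qed.
Lemma xorp0 x : xorp x (zerop n) = x.
Proof. by apply/ffunP=> i; rewrite !ffunE addbF. Qed.
Lemma xorp_inj s : injective (fun x => xorp x s).
Proof. by move=> x y /= H; rewrite -(xorpK x s) H xorpK. Qed.

Definition coll s (L : seq (point n)) := has (fun u => xorp u s \in L) L.

Lemma coll_eq s L1 L2 : L1 =i L2 -> coll s L1 = coll s L2.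
Proof. by move=> H; rewrite /coll (eq_has_r H); apply: eq_has => u /=; rewrite H. Qed.

Lemma coll_sub s L1 L2 : {subset L1 <= L2} -> coll s L1 -> coll s L2.
Proof. by move=> H /hasP [u uL xL]; apply/hasP; exists u; apply: H. Qed.

Fixpoint path (t : dtree n) (f : boolfun n) : seq (point n) :=
  match t with
  | Leaf _ => [::]
  | Node x t0 t1 => x :: (if f x then path t1 f else path t0 f)
  end.

Lemma size_path t f : (size (path t f) <= depth t)%N.
Proof.
elim: t => [b|x t0 IH0 t1 IH1] //=; rewrite ltnS.
by case: (f x); [apply: leq_trans (IH1) (leq_maxr _ _)|apply: leq_trans (IH0) (leq_maxl _ _)].
Qed.

Lemma coll_card L :
  (\sum_(s : point n | s != zerop n) coll s L <= size L ^ 2)%N.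
Proof.
pose S := [seq xorp u v | u <- L, v <- L].
apply: (@leq_trans (\sum_(s : point n) (s \in S))).
  rewrite [X in (_ <= X)%N](bigID (fun s => s != zerop n)) /=.
  apply: leq_trans (leq_addr _ _); apply: leq_sum => s _.
  case cs: (coll s L) => //; case/hasP: cs => u uL xL.
  rewrite lt0b; apply/allpairsP; exists (u, xorp u s) => /=; split => //.
  by rewrite -xorpA xorpp xorpC xorp0.
have -> : (\sum_(s : point n) (s \in S) = \sum_(s in S) 1)%N.
  by rewrite [RHS]big_mkcond; apply: eq_bigr => s _; case: (s \in S).
rewrite sum1_card; apply: leq_trans (card_size _) _.
by rewrite size_allpairs.
Qed.

End Xor.

Section Core.
Variable n : nat.
Variable s : point n.
Variable i : 'I_n.
Hypothesis si : s i.

Definition per (h : boolfun n) := [forall x, h x == h (xorp x s)].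
Definition domc (C : seq (point n * bool)) := map fst C.
Definition cons (C : seq (point n * bool)) (f : boolfun n) := all (fun p => f p.1 == p.2) C.

Lemma perP h : per h -> forall x, h (xorp x s) = h x.
Proof. by move/forallP=> H x; rewrite (eqP (H x)). Qed.

Lemma xs_i x : xorp x s i = ~~ x i.
Proof. by rewrite ffunE si addbT. Qed.

Section Rep.
Variable D : seq (point n).
Hypothesis sfree : ~~ coll s D.
Definition rep x := (x \in D) || ((xorp x s \notin D) && ~~ x i).

Lemma rep_or x : rep x || rep (xorp x s).
Proof.
rewrite /rep xorpK xs_i negbK.
by case: (x \in D); case: (xorp x s \in D); case: (x i).
Qed.

Lemma rep_nand x : ~~ (rep x && rep (xorp x s)).
Proof.
have H : x \in D -> xorp x s \notin D.
  by move=> xD; apply/negP => xsD; move/negP: sfree; apply; apply/hasP; exists x.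
rewrite /rep xorpK xs_i negbK.
case xD: (x \in D); first by rewrite (negbTE (H xD)).
by case: (xorp x s \in D); case: (x i).
Qed.

Definition mix (hg : boolfun n * boolfun n) : boolfun n :=
  [ffun x => if rep x then hg.1 x else hg.2 x].

Lemma mix_inj : {in [set hg | per hg.1 & per hg.2] &, injective mix}.
Proof.
move=> [h g] [h' g']; rewrite !inE /= => /andP [ph pg] /andP [ph' pg'] E.
have E' x : mix (h, g) x = mix (h', g') x by rewrite E.
have Hh : h = h'.
  apply/ffunP => x; have := rep_or x; case rx: (rep x) => /=.
    by move: (E' x); rewrite !ffunE rx.
  by move=> rxs; move: (E' (xorp x s)); rewrite !ffunE rxs /= !perP.
have Hg : g = g'.
  apply/ffunP => x; have := rep_nand x; case rx: (rep x) => /=; last first.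
    by move=> _; move: (E' x); rewrite !ffunE rx.
  by move/negbTE => rxs; move: (E' (xorp x s)); rewrite !ffunE rxs /= !perP.
by rewrite Hh Hg.
Qed.
End Rep.

Lemma card_leaf C : ~~ coll s (domc C) ->
  (#|[pred h | per h]| * #|[pred h | per h && cons C h]| <= #|[pred f | cons C f]|)%N.
Proof.
move=> sf.
pose A := [set h | per h && cons C h]; pose B := [set h | per h].
have -> : #|[pred h | per h]| = #|B| by apply: eq_card => h; rewrite !inE.
have -> : #|[pred h | per h && cons C h]| = #|A| by apply: eq_card => h; rewrite !inE.
rewrite mulnC -cardsX.
rewrite -(@card_in_imset _ _ (mix (domc C))); last first.
  move=> p1 p2 H1 H2; apply: (mix_inj sf).
    by move: H1; rewrite !inE => /andP [/andP [-> _] ->].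
  by move: H2; rewrite !inE => /andP [/andP [-> _] ->].
apply: subset_leq_card; apply/subsetP => f /imsetP [[h g]].
rewrite !inE /= => /andP [/andP [_ ch] _] ->.
apply/allP => p pC; rewrite ffunE.
have -> : rep (domc C) p.1 by rewrite /rep map_f.
by move/allP: ch => /(_ p pC).
Qed.

End Core.

Section Core2.
Variable n : nat.
Variable s : point n.
Variable i : 'I_n.
Hypothesis si : s i.

Lemma sum_card (T : finType) (Q : pred T) : (\sum_(x | Q x) 1 = #|[pred x | Q x]|)%N.
Proof. by rewrite -sum1_card. Qed.

Lemma split_x (Q : pred (boolfun n)) (F : bool -> boolfun n -> nat) x :
  (\sum_(h | Q h) F (h x) h =
   \sum_(h | Q h && (h x == true)) F true h + \sum_(h | Q h && (h x == false)) F false h)%N.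
Proof.
rewrite (bigID (fun h : boolfun n => h x) Q) /=; congr (_ + _).
  by apply: eq_big => [h|h /andP [_ ->]] //; rewrite eqb_id.
by apply: eq_big => [h|h /andP [_ /negbTE ->]] //; rewrite eqbF_neg.
Qed.

Lemma core t : forall C, ~~ coll s (domc C) ->
  (#|[pred h | per s h]| * \sum_(h | per s h && cons C h) run t h
     <= \sum_(f | cons C f) (run t f || coll s (domc C ++ path t f)))%N.
Proof.
elim: t => [b|x t0 IH0 t1 IH1] C sf /=.
  case: b; last by rewrite big1 ?muln0.
  rewrite !sum_card; apply: leq_trans (card_leaf si sf) _.
  by rewrite -sum_card; apply: leq_sum => f _.
case cx: (coll s (x :: domc C)).
  apply: (@leq_trans (#|[pred h | per s h]| * #|[pred h | per s h && cons C h]|)).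
    rewrite leq_mul2l -sum_card; apply/orP; right; apply: leq_sum => h _.
    by case: (h x); case: (run _ _).
  apply: leq_trans (card_leaf si sf) _; rewrite -sum_card; apply: leq_sum => f _.
  suff -> : coll s (domc C ++ x :: (if f x then path t1 f else path t0 f)) by rewrite orbT.
  by apply: coll_sub cx => y; rewrite !inE mem_cat inE => /orP [->|->]; rewrite ?orbT.
have E1 : forall h : boolfun n, (if h x then run t1 h else run t0 h) =
    run (if h x then t1 else t0) h by move=> h; case: (h x).
under eq_bigr => h _ do rewrite E1.
rewrite (split_x (fun h => per s h && cons C h) (fun b h => run (if b then t1 else t0) h)) /=.
have E2 : forall f : boolfun n,
   (((if f x then run t1 f else run t0 f) ||
    coll s (domc C ++ x :: (if f x then path t1 f else path t0 f))) : nat) =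
   (fun b f => (run (if b then t1 else t0) f ||
      coll s (domc ((x, b) :: C) ++ path (if b then t1 else t0) f)) : nat) (f x) f.
  move=> f /=; case: (f x); congr (_ || _); apply: coll_eq => y;
    by rewrite !inE !mem_cat !inE orbCA.
rewrite (eq_bigr _ (fun f _ => E2 f)).
rewrite (split_x (fun f => cons C f) (fun b f => (run (if b then t1 else t0) f ||
      coll s (domc ((x, b) :: C) ++ path (if b then t1 else t0) f)) : nat)) /= mulnDr.
have sf' : forall b, ~~ coll s (domc ((x, b) :: C)) by move=> b; rewrite /= cx.
apply: leq_add.
  apply: (leq_trans _ (leq_trans (IH1 _ (sf' true)) _)); apply: eq_leq.
    by f_equal; apply: eq_bigl => h; rewrite /cons /=; case: (_ == _); rewrite ?andbT ?andbF.
  by apply: eq_bigl => h; rewrite /cons /= andbC.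
apply: (leq_trans _ (leq_trans (IH0 _ (sf' false)) _)); apply: eq_leq.
  by f_equal; apply: eq_bigl => h; rewrite /cons /=; case: (_ == _); rewrite ?andbT ?andbF.
by apply: eq_bigl => h; rewrite /cons /= andbC.
Qed.

End Core2.

Section CardF.
Variable n : nat.
Variable s : point n.
Variable i : 'I_n.
Hypothesis si : s i.

Lemma card_F_per :
  (#|{: boolfun n}| <= #|[pred h | per s h]| * #|[pred h | per s h]|)%N.
Proof.
pose B := [set h | per s h].
have -> : #|[pred h | per s h]| = #|B| by apply: eq_card => h; rewrite !inE.
rewrite -cardsX.
pose lo (f : boolfun n) : boolfun n := [ffun x : point n => f (if x i then xorp x s else x)].
pose hi (f : boolfun n) : boolfun n := [ffun x : point n => f (if x i then x else xorp x s)].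
have ginj : injective (fun f => (lo f, hi f)).
  move=> f g [E1 E2]; apply/ffunP => x.
  have := congr1 (fun h : boolfun n => h x) E1; have := congr1 (fun h : boolfun n => h x) E2.
  by rewrite !ffunE; case: (x i).
rewrite -cardsT -(card_imset _ ginj); apply: subset_leq_card; apply/subsetP => p.
case/imsetP => f _ ->; rewrite !inE /=; apply/andP; split; apply/forallP => x;
  rewrite !ffunE si addbT xorpK; by case: (x i).
Qed.

End CardF.

Lemma small_sets (T : finType) (H : {set T}) k : (k <= #|H|)%N ->
  (3 ^ (#|H| - k) * #|[set A : {set T} | A \subset H & #|A| <= k]| <= 4 ^ #|H|)%N.
Proof.
move=> kH.
have S1 : (#|[set A : {set T} | A \subset H & #|A| <= k]| <=
          \sum_(j < k.+1) 'C(#|H|, j))%N.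
  rewrite -sum1_card big_mkcond /=.
  apply: (@leq_trans (\sum_(A : {set T}) \sum_(j < k.+1) (A \subset H) && (#|A| == j))).
    apply: leq_sum => A _; rewrite inE; case/boolP: ((A \subset H) && (#|A| <= k)) => // /andP [AH Ak].
    have jk : (#|A| < k.+1)%N by [].
    by rewrite (bigD1 (Ordinal jk)) //= AH eqxx.
  rewrite exchange_big /=; apply: leq_sum => j _.
  rewrite -cards_draws -sum1_card [X in (_ <= X)%N]big_mkcond /=.
  by apply: leq_sum => A _; rewrite inE.
apply: (@leq_trans (\sum_(j < k.+1) 'C(#|H|, j) * 3 ^ (#|H| - j))).
  rewrite mulnC; apply: leq_trans (leq_mul S1 (leqnn _)) _.
  rewrite big_distrl /=; apply: leq_sum => j _; rewrite leq_mul2l; apply/orP; right.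
  by rewrite leq_pexp2l // leq_sub2l // -ltnS.
have -> : (4 = 3 + 1)%N by [].
rewrite expnDn; rewrite (big_ord_widen _ (fun j => 'C(#|H|, j) * 3 ^ (#|H| - j)) (_ : k.+1 <= #|H|.+1)%N) //.
rewrite big_mkcond /=; apply: leq_sum => j _.
by case: (j < k.+1)%N; rewrite // exp1n muln1.
Qed.

Section Far.
Variable n : nat.
Variable s : point n.
Variable i : 'I_n.
Hypothesis si : s i.

Definition Hh := [set x : point n | ~~ x i].

Lemma card_Hh : #|~: Hh| = #|Hh| /\ (#|Hh| + #|Hh| = 2 ^ n)%N.
Proof.
have E : ~: Hh = (fun x => xorp x s) @: Hh.
  apply/setP => y; rewrite !inE negbK; apply/idP/imsetP.
    by move=> yi; exists (xorp y s); rewrite ?xorpK // inE (xs_i si) yi.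
  by case=> x; rewrite inE => xi ->; rewrite (xs_i si).
have C1 : #|~: Hh| = #|Hh| by rewrite E card_imset //; apply: xorp_inj.
split => //; rewrite -{2}C1 cardsC card_ffun card_bool card_ord //.
Qed.

Definition badset (f : boolfun n) := [set x : point n | ~~ x i & f x != f (xorp x s)].

Lemma bad_le_dist f g : per s g -> (#|badset f| <= fdist f g)%N.
Proof.
move=> pg.
pose m x := if f x != g x then x else xorp x s.
have minj : {in badset f &, injective m}.
  move=> x y; rewrite !inE => /andP [xi _] /andP [yi _]; rewrite /m.
  case: (f x != g x); case: (f y != g y) => // E.
  - by move: (congr1 (fun z : point n => z i) E); rewrite (xs_i si) (negbTE xi) (negbTE yi).
  - by move: (congr1 (fun z : point n => z i) E); rewrite (xs_i si) (negbTE xi) (negbTE yi).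
  - by apply: (@xorp_inj _ s).
rewrite /fdist -(card_in_imset minj); apply: subset_leq_card; apply/subsetP => y.
case/imsetP => x; rewrite !inE => /andP [_ fx] ->; rewrite /m.
case: ifP => // /negbFE /eqP fg.
by rewrite (perP pg) -fg eq_sym.
Qed.

Lemma card_bad k :
  (#|[pred f : boolfun n | #|badset f| <= k]| <=
    #|[set A : {set point n} | A \subset Hh & #|A| <= k]| * 2 ^ #|~: Hh|)%N.
Proof.
pose SA := [set A : {set point n} | A \subset Hh & #|A| <= k].
rewrite -card_powerset -cardsX.
pose g (f : boolfun n) := (badset f, [set x : point n | x i & f x]).
have ginj : injective g.
  move=> f1 f2 [E1 E2]; apply/ffunP => x.
  have B (x' : point n) : x' i -> f1 x' = f2 x'.
    move=> xi; move/setP: E2 => /(_ x'); rewrite !inE xi /=.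
    by case: (f1 x'); case: (f2 x').
  case xi: (x i); first by apply: B.
  have B' := B _ (eq_trans (xs_i si x) (congr1 negb xi)).
  move/setP: E1 => /(_ x); rewrite !inE xi /= B'.
  by case: (f1 x); case: (f2 x); case: (f2 (xorp x s)).
have -> : #|[pred f : boolfun n | #|badset f| <= k]| = #|g @: [set f | #|badset f| <= k]|.
  by rewrite card_imset //; apply: eq_card => f; rewrite !inE.
apply: subset_leq_card; apply/subsetP => p; case/imsetP => f; rewrite !inE => fk ->.
rewrite /g /= fk andbT; apply/andP; split; apply/subsetP => x; rewrite !inE.
  by case/andP.
by case/andP => ->.
Qed.

End Far.

Lemma growth j : (10 <= j)%N -> (96 * j <= 2 ^ j)%N.
Proof.
elim: j => // j IH; rewrite leq_eqVlt => /orP [/eqP <-|] //.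
rewrite ltnS => hj; have H := IH hj; rewrite expnS mulnSr mul2n -addnn leq_add //.
apply: leq_trans (_ : 2 ^ 7 <= 2 ^ j)%N; first by [].
by rewrite leq_pexp2l //; apply: leq_trans hj.
Qed.

Lemma arith j0 : (10 <= j0)%N -> (96 * j0 * 2 ^ (8 * j0) <= 3 ^ (6 * j0))%N.
Proof.
move=> hj; rewrite !expnM.
have -> : (3 ^ 6 = 729)%N by [].
have -> : (2 ^ 8 = 256)%N by [].
apply: (@leq_trans (512 ^ j0)).
  have -> : (512 = 2 * 256)%N by [].
  by rewrite expnMn leq_mul2r growth ?orbT.
by rewrite leq_exp2r //; apply: leq_trans hj.
Qed.

Definition nearb n (f : boolfun n) := [exists g, inL g && (8 * fdist f g <= 2 ^ n)%N].

Section Near.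
Variable n : nat.
Variable i0 : 'I_n.
Definition ci (s : point n) := odflt i0 [pick j | s j].
Lemma ci_s s : s != zerop n -> s (ci s).
Proof.
rewrite /ci; case: pickP => //= H; move/eqP; case; apply/ffunP => j.
by rewrite ffunE; apply/negbTE; rewrite H.
Qed.

Lemma near_count j0 : 2 ^ n = (16 * j0)%N -> (10 <= j0)%N ->
  (6 * #|[pred f : boolfun n | nearb f]| <= #|{: boolfun n}|)%N.
Proof.
move=> Hn hj.
pose SA := #|[set A : {set point n} | A \subset [set x : point n | ~~ x i0] & #|A| <= 2 * j0]|.
have step1 : (#|[pred f : boolfun n | nearb f]| <=
   \sum_(s : point n | s != zerop n) #|[pred f | #|badset s (ci s) f| <= 2 * j0]|)%N.
  rewrite -sum1_card big_mkcond /=.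
  apply: (@leq_trans (\sum_(f : boolfun n) \sum_(s : point n | s != zerop n)
           (#|badset s (ci s) f| <= 2 * j0)%N)); last first.
    rewrite exchange_big /=; apply: leq_sum => s _.
    by rewrite -sum1_card [X in (_ <= X)%N]big_mkcond /=; apply: leq_sum => f _; rewrite !inE.
  apply: leq_sum => f _; rewrite inE.
  case nf: (nearb f) => //; case/existsP: nf => g /andP [/existsP [s /andP [s0 ps]] dg].
  rewrite (bigD1 s) //=; apply: leq_trans (leq_addr _ _).
  rewrite lt0b; apply: leq_trans (bad_le_dist (ci_s s0) _ ps) _.
  by move: dg; rewrite Hn (_ : 16 * j0 = 8 * (2 * j0))%N ?leq_pmul2l // mulnA.
have step2 : forall s : point n, s != zerop n ->
   (3 ^ (6 * j0) * #|[pred f | #|badset s (ci s) f| <= 2 * j0]| <= 4 ^ (8 * j0) * 2 ^ (8 * j0))%N.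
  move=> s s0; have si := ci_s s0; have [C1 C2] := card_Hh si.
  have HH : #|Hh (ci s)| = (8 * j0)%N.
    by apply/eqP; rewrite -(eqn_pmul2l (_ : 0 < 2)%N) // mul2n -addnn C2 Hn mulnA.
  apply: leq_trans (leq_mul (leqnn _) (card_bad si _)) _.
  rewrite C1 HH mulnA leq_mul2r; apply/orP; right.
  have kH : (2 * j0 <= #|Hh (ci s)|)%N by rewrite HH leq_mul2r orbC.
  by have := small_sets kH; rewrite HH -mulnBl.
have step3 : (3 ^ (6 * j0) * #|[pred f : boolfun n | nearb f]| <=
      2 ^ n * (4 ^ (8 * j0) * 2 ^ (8 * j0)))%N.
  apply: leq_trans (leq_mul (leqnn _) step1) _.
  rewrite big_distrr /=; apply: (@leq_trans (\sum_(s : point n | s != zerop n) 4 ^ (8 * j0) * 2 ^ (8 * j0)))%N.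
    by apply: leq_sum => s s0; apply: step2.
  rewrite sum_nat_const leq_mul2r; apply/orP; right.
  apply: leq_trans (max_card _) _; by rewrite card_ffun card_bool card_ord.
rewrite -(@leq_pmul2l (3 ^ (6 * j0))) ?expn_gt0 // mulnCA.
apply: leq_trans (leq_mul (leqnn _) step3) _.
have Hp : #|point n| = (2 ^ n)%N by rewrite card_ffun card_bool card_ord.
rewrite card_ffun card_bool Hp Hn (_ : 2 ^ (16 * j0) = 4 ^ (8 * j0))%N; last first.
  by rewrite (_ : 16 * j0 = 2 * (8 * j0))%N ?expnM // mulnA.
have -> : (6 * (16 * j0 * (4 ^ (8 * j0) * 2 ^ (8 * j0))) =
   (96 * j0 * 2 ^ (8 * j0)) * 4 ^ (8 * j0))%N.
  by ring.
by rewrite leq_mul2r; apply/orP; right; apply: arith.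
Qed.
End Near.

Lemma all_of (T : Type) (P : pred T) (s : seq T) : (forall x, P x) -> all P s.
Proof. by move=> H; elim: s => //= x s ->; rewrite H. Qed.

Lemma all_imp (T : Type) (P Q : pred T) (s : seq T) :
  (forall x, P x -> Q x) -> all P s -> all Q s.
Proof. by move=> H; elim: s => //= x s IH /andP [/H -> /IH]. Qed.

Section Main.
Local Open Scope ring_scope.
Variable R : realFieldType.
Variable n : nat.
Variable A : rand_alg R n.
Hypothesis Hw : all (fun p => 0 <= p.1) A.
Hypothesis Hsum : \sum_(p <- A) p.1 = 1.
Variable q : nat.
Hypothesis Hq : all (fun p => depth p.2 <= q)%N A.

Lemma sumA_le (X Y : R * dtree n -> R) :
  (forall p, 0 <= p.1 -> (depth p.2 <= q)%N -> X p <= Y p) ->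
  \sum_(p <- A) X p <= \sum_(p <- A) Y p.
Proof.
move=> H; move: Hw Hq; elim: (A : seq (R * dtree n)) => [|p B IH] /=; first by rewrite !big_nil.
case/andP => p0 Bw /andP [pq Bq]; rewrite !big_cons.
by apply: lerD; [apply: H|apply: IH].
Qed.

Lemma acc_lin (Q : pred (boolfun n)) :
  \sum_(f | Q f) accept_prob A f = \sum_(p <- A) p.1 * (\sum_(f | Q f) run p.2 f)%:R.
Proof.
rewrite /accept_prob exchange_big /=; apply: eq_bigr => p _.
by rewrite natr_sum mulr_sumr.
Qed.

Lemma wsum_le (X Y : R * dtree n -> R) :
  all (fun p => X p <= Y p) A ->
  \sum_(p <- A) p.1 * X p <= \sum_(p <- A) p.1 * Y p.
Proof.
move: Hw; elim: (A : seq (R * dtree n)) => [|p B IH] /=; first by rewrite !big_nil.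
case/andP => p0 Bw /andP [Xp BX]; rewrite !big_cons.
by apply: lerD; [apply: ler_wpM2l|apply: IH].
Qed.

Lemma wsum_const (c : R) : \sum_(p <- A) p.1 * c = c.
Proof. by rewrite -mulr_suml Hsum mul1r. Qed.

Lemma acc_ge0 f : 0 <= accept_prob A f.
Proof.
rewrite /accept_prob -[X in X <= _](wsum_const 0).
by apply: wsum_le; apply: all_of => p; rewrite ler0n.
Qed.

Lemma acc_le1 f : accept_prob A f <= 1.
Proof.
rewrite /accept_prob -[X in _ <= X](wsum_const 1); apply: wsum_le; apply: all_of => p.
by case: (run _ _).
Qed.


Lemma nz_coord (s : point n) : s != zerop n -> exists i, s i.
Proof.
move=> s0; case: (pickP (fun j => s j)) => [j sj|H]; first by exists j.
by move: s0; case/eqP; apply/ffunP => j; rewrite ffunE H.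
Qed.

Lemma core0 (s : point n) i (si : s i) (t : dtree n) :
  (#|[pred h | per s h]| * \sum_(h | per s h) run t h <=
     \sum_(f : boolfun n) run t f + \sum_(f : boolfun n) coll s (path t f))%N.
Proof.
have := core si t (_ : ~~ coll s (domc [::])) => /(_ isT).
rewrite /cons /= -big_split /= => H; apply: leq_trans _ (leq_trans H _).
  by rewrite leq_eqVlt; apply/orP; left; apply/eqP; f_equal; apply: eq_bigl => h; rewrite andbT.
by apply: leq_sum => f _; case: (run _ _); case: (coll _ _).
Qed.

Lemma per_s (s : point n) (s0 : s != zerop n)
  (Hyes : forall f, inL f -> 2 / 3 <= accept_prob A f) :
  (2 / 3) * (#|{: boolfun n}|)%:R <= \sum_(f : boolfun n) accept_prob A f +
     \sum_(p <- A) p.1 * (\sum_(f : boolfun n) coll s (path p.2 f))%:R.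
Proof.
have [i si] := nz_coord s0.
set P := #|[pred h | per s h]|.
have H1 : P%:R * \sum_(h | per s h) accept_prob A h <=
   \sum_(f : boolfun n) accept_prob A f +
     \sum_(p <- A) p.1 * (\sum_(f : boolfun n) coll s (path p.2 f))%:R.
  rewrite acc_lin (acc_lin xpredT) mulr_sumr -big_split /=.
  apply: sumA_le => p p0 _.
  rewrite mulrCA -mulrDr ler_wpM2l //.
  by rewrite -natrM -natrD ler_nat (core0 si).
have H2 : P%:R * (2 / 3) <= \sum_(h | per s h) accept_prob A h.
  apply: (@le_trans _ _ (\sum_(h | per s h) (2 / 3 : R))).
    by rewrite sumr_const mulr_natl.
  apply: ler_sum => h ph; apply: Hyes; apply/existsP; exists s; by rewrite s0.
have H3 : (#|{: boolfun n}|)%:R <= P%:R * P%:R :> R by rewrite -natrM ler_nat (card_F_per si).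
apply: le_trans H1; apply: (@le_trans _ _ ((2 / 3) * (P%:R * P%:R))).
  by rewrite ler_wpM2l // divr_ge0.
by rewrite mulrCA ler_wpM2l // mulrC.
Qed.

Lemma notnear_far (f : boolfun n) : ~~ nearb f -> eps_far (1 / 8 : R) f.
Proof.
move=> nf g Lg; have : ~~ (8 * fdist f g <= 2 ^ n)%N.
  by apply: contra nf => H; apply/existsP; exists g; rewrite Lg.
rewrite -ltnNge => H; rewrite mul1r ltr_pdivrMl // -natrM ltr_nat //.
Qed.

Lemma final_ineq
  (Hyes : forall f, inL f -> 2 / 3 <= accept_prob A f)
  (Hno : forall f, eps_far (1 / 8 : R) f -> accept_prob A f <= 1 / 3)
  j0 (Hn : (2 ^ n = 16 * j0)%N) (hj : (10 <= j0)%N) (i0 : 'I_n) :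
  (2 ^ n <= 7 * q ^ 2)%N.
Proof.
set F := #|{: boolfun n}|.
set Z := #|[pred s : point n | s != zerop n]|.
set S := \sum_(f : boolfun n) accept_prob A f.
set nr := #|[pred f : boolfun n | nearb f]|.
have HZ : (Z.+1 = 2 ^ n)%N.
  rewrite /Z (cardC1 (zerop n)) card_ffun card_bool card_ord prednK //.
  by rewrite expn_gt0.
have Hs : Z%:R * ((2 / 3) * F%:R) <= Z%:R * S + (F * q ^ 2)%:R.
  have E c : Z%:R * c = \sum_(s in [pred s : point n | s != zerop n]) c.
    by rewrite sumr_const mulr_natl.
  rewrite !E.
  apply: (@le_trans _ _ (\sum_(s in [pred s : point n | s != zerop n])
     (S + \sum_(p <- A) p.1 * (\sum_(f : boolfun n) coll s (path p.2 f))%:R))).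
    by apply: ler_sum => s s0; apply: per_s.
  rewrite big_split /= lerD2l.
  rewrite exchange_big /=.
  rewrite -[X in _ <= X](wsum_const (F * q ^ 2)%:R); apply: sumA_le => p p0 dp.
  rewrite -mulr_sumr ler_wpM2l // -natr_sum ler_nat exchange_big /=.
  rewrite /F -sum1_card big_distrl /=; apply: leq_sum => f _; rewrite mul1n.
  have HC := @coll_card n (path p.2 f); apply: leq_trans HC _; rewrite leq_exp2r //.
  by apply: leq_trans (size_path _ _) dp.
have HS : S <= F%:R * (1 / 3) + nr%:R.
  rewrite /S (bigID (fun f => nearb f)) /= addrC; apply: lerD.
    apply: (@le_trans _ _ (\sum_(f | ~~ nearb f) (1 / 3 : R))).
      by apply: ler_sum => f nf; apply: Hno; apply: notnear_far.
    rewrite (_ : F%:R * (1 / 3) = \sum_(f : boolfun n) (1 / 3 : R)); last first.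
      by rewrite sumr_const mulr_natl.
    by rewrite [X in _ <= X](bigID (fun f => nearb f)) /= lerDr sumr_ge0 // => f _; rewrite divr_ge0.
  apply: (@le_trans _ _ (\sum_(f | nearb f) (1 : R))).
    by apply: ler_sum => f _; apply: acc_le1.
  by rewrite sumr_const.
have Hnr : 6 * nr%:R <= F%:R :> R.
  by rewrite -natrM ler_nat; apply: (near_count i0 Hn hj).
have F0 : 0 < F%:R :> R.
  by rewrite ltr0n /F card_ffun card_bool expn_gt0.
have Z0 : 0 <= Z%:R :> R by [].
have HZq : Z%:R <= 6 * (q ^ 2)%:R :> R.
  rewrite natrM in Hs; nra.
have HZq' : (Z <= 6 * q ^ 2)%N by rewrite -(ler_nat R) natrM.
rewrite -HZ.
have q0 : (0 < q)%N.
  rewrite lt0n; apply/negP => /eqP q0.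
  move: HZq'; rewrite q0 exp0n // muln0 leqn0 => /eqP Z0'.
  by move: HZ; rewrite Z0' Hn; lia.
have : (0 < q ^ 2)%N by rewrite expn_gt0 q0.
lia.
Qed.

End Main.

Local Open Scope ring_scope.

Theorem theorem4p2 :
  exists K n0 : nat, (0 < K)%N /\
    forall n : nat, (n0 <= n)%N ->
    forall (R : realFieldType) (A : rand_alg R n) (q : nat),
      is_tester (1 / 8 : R) A -> makes_at_most A q ->
      (2 ^ n <= K * q ^ 2)%N.
Proof.
exists 7%N, 8%N; split => // n hn R A q [[Hw Hsum] [Hyes Hno]] Hq.
have n0 : (0 < n)%N by apply: leq_trans hn.
have Hn : (2 ^ n = 16 * 2 ^ (n - 4))%N.
  by rewrite -[in LHS](subnKC (_ : 4 <= n)%N) ?expnD //; apply: leq_trans hn.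
have hj : (10 <= 2 ^ (n - 4))%N.
  apply: (@leq_trans (2 ^ 4)) => //; rewrite leq_exp2l //.
  by rewrite leq_subRL //; apply: leq_trans hn.
exact: (final_ineq Hw Hsum Hq Hyes Hno Hn hj (Ordinal n0)).
Qed.
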